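(* Let $N \ge 1$ be an integer. For every integer $M$ with $0 \le M \le \binom{\lfloor N/2 \rfloor + 1}{2} - 1$, the pair $(N,M)$ is feasible for the family of all line graphs.
   Context: All graphs are finite and simple; $L(G)$ is the line graph of $G$. A pair $(N,M)$ is feasible (for the family of all line graphs) if there exists a graph $G$ such that $L(G)$ has exactly $N$ vertices and exactly $M$ edges. *)

(* Defs.v *)
From mathcomp Require Import all_boot.
Set Implicit Arguments.
Unset Strict Implicit.
Unset Printing Implicit Defensive.

(* A finite simple graph with vertex type T is given by its edge set
   E : {set {set T}}, each edge being a 2-element subset of T. *)
Definition simple_graph (T : finType) (E : {set {set T}}) : Prop :=
  forall e, e \in E -> #|e| = 2.

Definition line_graph_edges (T : finType) (E : {set {set T}})
  : {set {set {set T}}} :=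
  [set [set e; f] | e in E, f in E & (e != f) && ~~ [disjoint e & f]].

Definition lg_vertices (T : finType) (E : {set {set T}}) : nat := #|E|.
Definition lg_edges (T : finType) (E : {set {set T}}) : nat :=
  #|line_graph_edges E|.

(* (N, M) is feasible for the family of line graphs: some finite simple graph
   G has |V(L(G))| = N and |E(L(G))| = M.  Every finite graph is isomorphic to
   one on vertex type 'I_n. *)
Definition line_feasible (N M : nat) : Prop :=
  exists (n : nat) (E : {set {set 'I_n}}),
    simple_graph E /\ lg_vertices E = N /\ lg_edges E = M.

(* Main.v *)
Require Import Defs.
From mathcomp Require Import all_boot zify.

Lemma lg_add (T : finType) (E : {set {set T}}) e : e \notin E ->
  #|line_graph_edges (e |: E)| =
  #|line_graph_edges E| + #|[set f in E | ~~ [disjoint e & f]]|.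
Proof.
move=> eE.
set S := [set f in E | ~~ [disjoint e & f]].
have -> : line_graph_edges (e |: E) =
   line_graph_edges E :|: [set [set e; f] | f in S].
  apply/setP => X; apply/idP/idP.
    case/imset2P => x y; rewrite !inE => /orP[/eqP->|xE].
      case/andP => /orP[/eqP->|yE]; first by rewrite eqxx.
      case/andP=> ey dj ->; apply/orP; right; apply/imsetP; exists y => //.
      by rewrite inE yE.
    case/andP => /orP[/eqP->|yE].
      case/andP=> xe dj ->; apply/orP; right; apply/imsetP; exists x.
        by rewrite inE xE /= disjoint_sym.
      by rewrite setUC.
    move=> H ->; apply/orP; left; apply/imset2P; exists x y => //.
    by rewrite inE yE.
  rewrite inE; case/orP.
    case/imset2P => x y xE; rewrite inE => /andP[yE H] ->.
    apply/imset2P; exists x y; first by rewrite inE xE orbT.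
    by rewrite inE inE yE orbT /= H.
    done.
  case/imsetP => f; rewrite inE => /andP[fE dj] ->.
  apply/imset2P; exists e f; first by rewrite !inE eqxx.
    rewrite !inE fE orbT dj andbT /=; apply/eqP => ef; move: eE; by rewrite ef fE.
  by [].
rewrite cardsU.
have -> : line_graph_edges E :&: [set [set e; f] | f in S] = set0.
  apply/setP => X; rewrite !inE; apply/negP => /andP[].
  case/imset2P => x y xE; rewrite inE => /andP[yE _] ->.
  case/imsetP => f _ /setP/(_ e); rewrite !inE eqxx /=.
  by case/orP => /eqP ex; move: eE; rewrite ex ?xE ?yE.
rewrite cards0 subn0 card_in_imset //.
move=> f g; rewrite !inE => /andP[fE _] /andP[gE _] /setP/(_ f).
rewrite !inE eqxx orbT /=.
move/esym; case/orP => /eqP // ef; move: eE; by rewrite -ef fE.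
Qed.

Lemma disjP (T : finType) (A B : {set T}) :
  reflect (forall x, x \in A -> x \in B -> False) [disjoint A & B].
Proof.
rewrite -setI_eq0; apply: (iffP eqP) => [H x xA xB | H].
  have : x \in A :&: B by rewrite inE xA xB.
  by rewrite H inE.
apply/setP => x; rewrite !inE; apply/negP => /andP[]; exact: H.
Qed.

Section Constr.
Variables (N a r : nat).
Hypothesis a1 : 0 < a.
Hypothesis arN : a + r <= N.

Definition pv i := if i < a then 0 else if i < a + r then (2*i).-1 else (2*i).+2.
Definition ed i : {set 'I_(2*N).+1} := [set inord (pv i); inord (2*i).+1].

Lemma inord_eq x y : x <= 2*N -> y <= 2*N ->
  (inord x == inord y :> 'I_(2*N).+1) = (x == y).
Proof.
move=> hx hy; apply/eqP/eqP => [/(congr1 (@nat_of_ord _))|->//].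
by rewrite !inordK // ltnS.
Qed.

Lemma pv_le i : i < N -> pv i <= 2*N.
Proof. rewrite /pv; case: ifP => _; [lia|case: ifP => _; lia]. Qed.

Definition meet (i j : nat) :=
  [|| pv i == pv j, pv i == (2*j).+1, (2*i).+1 == pv j | (2*i).+1 == (2*j).+1].

Lemma meetE i j : i < N -> j < N -> ~~ [disjoint ed i & ed j] = meet i j.
Proof.
move=> iN jN; have hi := pv_le i iN; have hj := pv_le j jN.
have hi2 : (2*i).+1 <= 2*N by lia.
have hj2 : (2*j).+1 <= 2*N by lia.
apply/idP/idP.
  apply: contraLR => nm; rewrite negbK; apply/disjP => x.
  rewrite !inE => /orP[]/eqP->; rewrite !inord_eq //;
  move: nm; rewrite /meet; do 4 (case: eqP => //=).
rewrite /meet => /or4P[] /eqP E; apply/negP => /disjP H;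
  [apply: (H (inord (pv i)))|apply: (H (inord (pv i)))|apply: (H (inord (2*i).+1))|
   apply: (H (inord (2*i).+1))];
  by rewrite !inE !inord_eq // ?E eqxx ?orbT.
Qed.

Definition cnt i := if i < a then i else if i < a + r then 1 else 0.

Lemma count_meet i : i < N -> count (meet i) (iota 0 i) = cnt i.
Proof.
move=> iN; rewrite /cnt; case: ifP => ia.
  rewrite -[RHS](size_iota 0 i) -count_predT; apply: eq_in_count => j.
  rewrite mem_iota /meet /pv => /andP[_ ji].
  by rewrite ia (ltn_trans ji ia).
case: ifP => iar.
  have -> : i = i.-1 + 1 by lia.
  rewrite iotaD count_cat /= add0n.
  have -> : meet (i.-1 + 1) i.-1.
    rewrite /meet /pv; case: ifP => h1; first lia.
    case: ifP => h2; last lia.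
    apply/or4P; constructor 2; apply/eqP.
    lia.
  have -> : count (meet (i.-1 + 1)) (iota 0 i.-1) = 0.
    apply/eqP; rewrite -leqn0 leqNgt -has_count; apply/hasPn => j.
    rewrite mem_iota /meet /pv => /andP[_ ji] /=.
    case: ifP => h1; first lia. case: ifP => h2; last lia.
    rewrite !negb_or; apply/and4P; split; apply/eqP;
      (repeat case: ifP => ?; lia).
  by [].
apply/eqP; rewrite -leqn0 leqNgt -has_count; apply/hasPn => j.
rewrite mem_iota /meet /pv => /andP[_ ji] /=.
rewrite ia iar.
rewrite !negb_or; apply/and4P; split; apply/eqP;
  (repeat case: ifP => ?; lia).
Qed.

Fixpoint Es m : {set {set 'I_(2*N).+1}} :=
  if m is m'.+1 then ed m' |: Es m' else set0.

Lemma Es_mem m X : X \in Es m -> exists2 j, j < m & X = ed j.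
Proof.
elim: m => [|m IH] /=; first by rewrite inE.
rewrite in_setU1 => /orP[/eqP->|/IH[j jm ->]]; first by exists m.
by exists j => //; apply: ltnW.
Qed.

Lemma ed_notin i : i < N -> ed i \notin Es i.
Proof.
move=> iN; apply/negP => /Es_mem[j ji] /setP/(_ (inord (2*i).+1)).
have hj := pv_le j (ltn_trans ji iN).
rewrite !inE eqxx orbT !inord_eq; try lia.
rewrite /pv; repeat case: ifP => ?; lia.
Qed.

Lemma count_set (P : pred {set 'I_(2*N).+1}) i : i <= N ->
  #|[set f in Es i | P f]| = count (fun j => P (ed j)) (iota 0 i).
Proof.
elim: i => [|i IH] iN; first by rewrite /= (eq_card0 (A := [set f in set0 | P f])) // => f; rewrite !inE.
have -> : iota 0 i.+1 = iota 0 i ++ [:: i] by rewrite -addn1 iotaD.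
change (Es i.+1) with (ed i |: Es i).
rewrite count_cat /= -IH; last lia.
have nin := ed_notin i iN.
case Pi: (P (ed i)) => /=.
  have -> : [set f in ed i |: Es i | P f] = ed i |: [set f in Es i | P f].
    apply/setP => f; rewrite !inE; case: eqP => [->|] //=; by rewrite Pi.
  rewrite cardsU1 inE (negbTE nin) /=; lia.
have -> : [set f in ed i |: Es i | P f] = [set f in Es i | P f].
  apply/setP => f; rewrite !inE; case: eqP => [->|] //=; by rewrite Pi andbF.
by rewrite !addn0.
Qed.

Definition F m := if m <= a then 'C(m, 2) else if m <= a + r then 'C(a, 2) + (m - a)
  else 'C(a, 2) + r.

Lemma lgEs m : m <= N -> lg_edges (Es m) = F m.
Proof.
elim: m => [|m IH] mN.
  rewrite /lg_edges /F /=; apply/eqP; rewrite cards_eq0; apply/eqP/setP => X.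
  rewrite inE; apply/negP => /imset2P[x y]; by rewrite in_set0.
change (Es m.+1) with (ed m |: Es m); rewrite /lg_edges lg_add; last exact: ed_notin.
rewrite -/(lg_edges (Es m)) IH; last lia.
rewrite count_set; last lia.
rewrite (eq_in_count (a2 := meet m)); last first.
  move=> j; rewrite mem_iota => /andP[_ jm]; apply: meetE; lia.
rewrite count_meet // /F /cnt.
case: (ltnP m a) => h1.
  by rewrite (ltnW h1) binS bin1.
case: (ltnP m (a + r)) => h2.
  case: (leqP m a) => h3; last by rewrite (ltnW h2); lia.
  have E : m = a by lia.
  rewrite E subSnn; lia.
case: (leqP m a) => h3.
  have E : m = a by lia.
  have E2 : r = 0 by lia.
  by rewrite E E2 !addn0.
case: (leqP m (a+r)) => h5; lia.
Qed.

Lemma cardEs m : m <= N -> #|Es m| = m.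
Proof.
elim: m => [|m IH] mN /=; first by rewrite cards0.
rewrite cardsU1 ed_notin // IH //; lia.
Qed.

Lemma simpleEs m : m <= N -> simple_graph (Es m).
Proof.
move=> mN X /Es_mem[j jm ->]; rewrite cards2.
have jN : j < N by lia.
have hj := pv_le j jN.
rewrite inord_eq; try lia.
rewrite /pv; repeat case: ifP => ?; lia.
Qed.

End Constr.

Lemma tri_decomp M : exists a r, [/\ 0 < a, r < a & M = 'C(a, 2) + r].
Proof.
elim: M => [|M [a [r [a0 ra ->]]]]; first by exists 1, 0.
case: (ltnP r.+1 a) => h.
  by exists a, r.+1; split => //; rewrite addnS.
exists a.+1, 0; split => //.
have -> : r = a.-1 by lia.
rewrite binS bin1 addn0; lia.
Qed.

Theorem mainTheorem17 (N M : nat) :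
  1 <= N -> M < 'C(N./2 + 1, 2) -> line_feasible N M.
Proof.
move=> N1 HM.
have [a [r [a0 ra EM]]] := tri_decomp M.
have aN : a <= N./2.
  rewrite leqNgt; apply/negP => h.
  have := leq_bin2l 2 h; rewrite -addn1; lia.
have hN := odd_double_half N.
have arN : a + r <= N by rewrite -hN -addnn; lia.
exists (2*N).+1, (Es N a r N); split; first exact: simpleEs.
split; first by rewrite /lg_vertices cardEs.
rewrite lgEs // /F EM.
case: (leqP N a) => h1.
  have E : N = a by lia.
  have E2 : r = 0 by lia.
  by rewrite E E2 addn0.
case: (leqP N (a + r)) => h2; last by [].
have -> : N = a + r by lia.
by rewrite addKn.
Qed.
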